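(* Let $(\bm \Pi, S)$ be a price system with $S\in\mathbb{R}_+^{(N+1)\times K}$. If the market model is complete, then it is a least-squares market, i.e. $S^+\bm\Pi\in\mathcal{Q}$, where $S^+$ is the Moore–Penrose pseudoinverse of $S$.
   Context: Single-period market with finite sample space $\Omega$, $K=|\Omega|$. A price system $(\bm\Pi,S)$: $\bm\Pi=(1,\Pi_2,\dots,\Pi_{N+1})^T\in\mathbb{R}_+^{N+1}$ are current prices and $S\in\mathbb{R}_+^{(N+1)\times K}$, with $S_{i\omega}$ the payoff of asset $i$ in outcome $\omega$; the first row of $S$ is all ones (safe asset), and the assets are non-redundant (no row of $S$ is a linear combination of the others). The market is arbitrage-free if there is no $\bm v\in\mathbb{R}^{N+1}$ with $\bm v^T\bm\Pi\le 0$, $S^T\bm v\ge 0$ and $(S^T\bm v)_j>0$ for some $j$. An arbitrage-free market model is complete if for every $\bm D\in\mathbb{R}_+^K$ there exists $\bm\xi\in\mathbb{R}^{N+1}$ with $\bm D=S^T\bm\xi$. $\mathcal{Q}:=\{\bm q\in\mathbb{R}^K: q_k>0\ \forall k,\ \sum_k q_k=1,\ S\bm q=\bm\Pi\}$ is the set of equivalent martingale measures. An arbitrage-free market model is a least-squares market if $S^+\bm\Pi\in\mathcal{Q}$. *)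

(* Defs.v *)
From mathcomp Require Import all_boot all_order all_algebra.
Set Implicit Arguments. Unset Strict Implicit. Unset Printing Implicit Defensive.
Import Order.TTheory GRing.Theory Num.Theory.
Local Open Scope ring_scope.

Section Market.
Variable R : realFieldType.

(* X is a Moore-Penrose pseudoinverse of A (the four Penrose conditions;
   over a real field such an X exists and is unique). *)
Definition is_pinv (m n : nat) (A : 'M[R]_(m, n)) (X : 'M[R]_(n, m)) : Prop :=
  [/\ A *m X *m A = A, X *m A *m X = X,
      (A *m X)^T = A *m X & (X *m A)^T = X *m A].

Definition price_system (N K : nat) (Pi : 'cV[R]_(N.+1)) (S : 'M[R]_(N.+1, K)) : Prop :=
  [/\ Pi ord0 ord0 = 1,
      (forall i, 0 <= Pi i ord0),
      (forall i k, 0 <= S i k),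
      (forall k, S ord0 k = 1)
    & row_free S (* non-redundant: no row is a linear combination of the others *)].

Definition arbitrage_free (N K : nat) (Pi : 'cV[R]_(N.+1)) (S : 'M[R]_(N.+1, K)) : Prop :=
  ~ exists v : 'cV[R]_(N.+1),
      [/\ (v^T *m Pi) ord0 ord0 <= 0,
          (forall k, 0 <= (S^T *m v) k ord0)
        & exists j, 0 < (S^T *m v) j ord0].

Definition complete (N K : nat) (Pi : 'cV[R]_(N.+1)) (S : 'M[R]_(N.+1, K)) : Prop :=
  arbitrage_free Pi S /\
  forall D : 'cV[R]_K, (forall k, 0 <= D k ord0) ->
    exists xi : 'cV[R]_(N.+1), D = S^T *m xi.

Definition in_Q (N K : nat) (Pi : 'cV[R]_(N.+1)) (S : 'M[R]_(N.+1, K)) (q : 'cV[R]_K) : Prop :=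
  [/\ (forall k, 0 < q k ord0), \sum_k q k ord0 = 1 & S *m q = Pi].

Definition least_squares_market (N K : nat) (Pi : 'cV[R]_(N.+1)) (S : 'M[R]_(N.+1, K)) : Prop :=
  arbitrage_free Pi S /\
  forall Splus : 'M[R]_(K, N.+1), is_pinv S Splus -> in_Q Pi S (Splus *m Pi).

End Market.

(* Main.v *)
Require Import Defs.
From mathcomp Require Import all_boot all_order all_algebra.
Import Order.TTheory GRing.Theory Num.Theory.
Local Open Scope ring_scope.

Theorem mainTheorem4 (R : realFieldType) (N K : nat)
  (Pi : 'cV[R]_(N.+1)) (S : 'M[R]_(N.+1, K)) :
  price_system Pi S -> complete Pi S -> least_squares_market Pi S.
Proof.
move=> [Pi0 _ _ S0 rfS] [AF compl]; split => // X [H1 _ _ _].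
have SX : S *m X = 1%:M.
  apply: (row_free_inj rfS) => /=.
  by rewrite H1 mul1mx.
set q := X *m Pi.
have Sq : S *m q = Pi by rewrite /q mulmxA SX mul1mx.
split => //.
- move=> j; rewrite ltNge; apply/negP => Hq; apply: AF.
  have [xi Hxi] := compl (delta_mx j 0) (fun k => ltac:(by rewrite mxE ler0n)).
  exists xi; split.
  + have E : xi^T *m S = (S^T *m xi)^T by rewrite trmx_mul trmxK.
    rewrite -Sq mulmxA E -Hxi.
    rewrite mxE (bigD1 j) //= big1 ?addr0.
      by move: Hq; rewrite !mxE !eqxx mul1r.
    by move=> k /negbTE nk; rewrite !mxE nk mul0r.
  + by move=> k; rewrite -Hxi mxE ler0n.
  + by exists j; rewrite -Hxi mxE !eqxx ltr01.
- have := congr1 (fun M : 'cV[R]_(N.+1) => M ord0 ord0) Sq; rewrite /= mxE Pi0 => <-.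
  by apply: eq_bigr => k _; rewrite S0 mul1r.
Qed.
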